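(* Let $\mathbb{QU}$ be the rational Urysohn space and let $\mathbf{A},\mathbf{B}\subset\mathbb{QU}$ be finite. Then $\mathrm{Iso}_{\mathbf{A}\cap\mathbf{B}}(\mathbb{QU})=\overline{\langle\mathrm{Iso}_{\mathbf{A}}(\mathbb{QU}),\mathrm{Iso}_{\mathbf{B}}(\mathbb{QU})\rangle}$.
   Context: The rational Urysohn space $\mathbb{QU}$ is the unique countable metric space with rational distances into which every finite metric space with rational distances embeds isometrically and in which every isometry between finite subsets extends to an isometry of $\mathbb{QU}$. Its isometry group carries the topology of pointwise convergence ($\mathbb{QU}$ taken discrete), and the closure is taken in this topology. For $\mathbf{D}\subseteq\mathbb{QU}$, $\mathrm{Iso}_{\mathbf{D}}(\mathbb{QU})$ is the subgroup of isometries fixing $\mathbf{D}$ pointwise; $\langle X,Y\rangle$ is the subgroup generated by $X\cup Y$. *)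

(* Defs.v *)
From HB Require Import structures.
From mathcomp Require Import all_boot all_order all_algebra.
Set Implicit Arguments. Unset Strict Implicit. Unset Printing Implicit Defensive.
Import Order.TTheory GRing.Theory Num.Theory.
Local Open Scope ring_scope.

Definition is_metric (T : Type) (d : T -> T -> rat) : Prop :=
  [/\ forall x y, 0 <= d x y,
      forall x y, d x y = 0 <-> x = y,
      forall x y, d x y = d y x &
      forall x y z, d x z <= d x y + d y z].

Definition is_isometry (T : Type) (d : T -> T -> rat) (g : T -> T) : Prop :=
  (forall x y, d (g x) (g y) = d x y) /\ bijective g.

Definition rat_universal (T : Type) (d : T -> T -> rat) : Prop :=
  forall (F : finType) (dF : F -> F -> rat), is_metric dF ->
    exists f : F -> T, forall x y, d (f x) (f y) = dF x y.

Definition ultrahomogeneous (T : eqType) (d : T -> T -> rat) : Prop :=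
  forall (A : seq T) (p : T -> T),
    (forall x y, x \in A -> y \in A -> d (p x) (p y) = d x y) ->
    exists g, is_isometry d g /\ forall x, x \in A -> g x = p x.

(* (T,d) is (isometric to) the rational Urysohn space QU. *)
Definition is_rational_Urysohn (T : countType) (d : T -> T -> rat) : Prop :=
  [/\ is_metric d, rat_universal d & ultrahomogeneous d].

Definition Iso_fix (T : Type) (d : T -> T -> rat) (D : T -> Prop) (g : T -> T)
  : Prop := is_isometry d g /\ forall x, D x -> g x = x.

Definition is_subgroup (T : Type) (d : T -> T -> rat) (H : (T -> T) -> Prop)
  : Prop :=
  [/\ forall g, H g -> is_isometry d g,
      H id,
      forall g h, H g -> H h -> H (g \o h) &
      forall g h, H g -> cancel g h -> cancel h g -> H h].

Definition generated (T : Type) (d : T -> T -> rat) (S : (T -> T) -> Prop)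
  (g : T -> T) : Prop :=
  forall H, is_subgroup d H -> (forall h, S h -> H h) -> H g.

(* Closure in Iso(T,d) for the topology of pointwise convergence (T discrete):
   g is in the closure of S iff every finite set of points is moved by g as by
   some element of S. *)
Definition iso_closure (T : eqType) (d : T -> T -> rat) (S : (T -> T) -> Prop)
  (g : T -> T) : Prop :=
  is_isometry d g /\
  forall F : seq T, exists h, S h /\ forall x, x \in F -> h x = g x.

(* Main.v *)
Require Import Defs.
From mathcomp Require Import all_boot all_order all_algebra.
Set Implicit Arguments. Unset Strict Implicit. Unset Printing Implicit Defensive.
Import Order.TTheory GRing.Theory Num.Theory.
Local Open Scope ring_scope.

Section Grp.
Variables (T : Type) (d : T -> T -> rat).

Lemma iso_subgroup : is_subgroup d (is_isometry d).
Proof.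
split.
- by [].
- by split=> //; exists id.
- move=> g h [dg bg] [dh bh]; split; last exact: bij_comp.
  by move=> x y /=; rewrite dg dh.
- move=> g h [dg bg] gh hg; split; last by exists g.
  by move=> x y; rewrite -dg !hg.
Qed.

Lemma fix_subgroup (D : T -> Prop) : is_subgroup d (Iso_fix d D).
Proof.
have [I1 I2 I3 I4] := iso_subgroup.
split.
- by move=> g [].
- by split.
- move=> g h [ig fg] [ih fh]; split; first exact: I3.
  by move=> x Dx /=; rewrite fh // fg.
- move=> g h [ig fg] gh hg; split; first exact: I4 gh hg.
  by move=> x Dx; rewrite -{1}(fg x Dx) gh.
Qed.

Lemma gen_sub (S H : (T -> T) -> Prop) g :
  is_subgroup d H -> (forall h, S h -> H h) -> generated d S g -> H g.
Proof. by move=> sH SH; apply. Qed.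

Lemma gen_mono (S S' : (T -> T) -> Prop) g :
  (forall h, S h -> S' h) -> generated d S g -> generated d S' g.
Proof. by move=> SS' gS H sH HS; apply: gS => // h /SS'; apply: HS. Qed.

Lemma gen_in (S : (T -> T) -> Prop) g : S g -> generated d S g.
Proof. by move=> Sg H _; apply. Qed.

Lemma gen_id (S : (T -> T) -> Prop) : generated d S id.
Proof. by move=> H [] . Qed.

Lemma gen_comp (S : (T -> T) -> Prop) g h :
  generated d S g -> generated d S h -> generated d S (g \o h).
Proof. by move=> Sg Sh H sH HS; case: (sH) => _ _ c _; apply: c; [apply: Sg|apply: Sh]. Qed.

Lemma gen_inv (S : (T -> T) -> Prop) g :
  (forall h, S h -> is_isometry d h) ->
  generated d S g -> exists h, [/\ generated d S h, cancel g h & cancel h g].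
Proof.
move=> Siso Sg.
have [_ [h gh hg]] := gen_sub iso_subgroup Siso Sg.
exists h; split=> // H sH HS; case: (sH) => _ _ _ c; apply: (c g) => //.
exact: Sg.
Qed.
End Grp.

Definition mfold (T : Type) (l : seq T) (h : T -> rat) (K : rat) : rat :=
  foldr (fun a m => Num.min (h a) m) K l.

Lemma mfold_leK (T : Type) (l : seq T) h K : mfold l h K <= K.
Proof. by elim: l => //= a l IH; rewrite ge_min IH orbT. Qed.

Lemma mfold_le (T : eqType) (l : seq T) h K a : a \in l -> mfold l h K <= h a.
Proof.
elim: l => //= b l IH; rewrite inE => /orP [/eqP ->|al]; first by rewrite ge_min lexx.
by rewrite ge_min IH ?orbT.
Qed.

Lemma mfold_ge (T : eqType) (l : seq T) h K L :
  L <= K -> (forall a, a \in l -> L <= h a) -> L <= mfold l h K.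
Proof.
move=> LK; elim: l => //= b l IH H; rewrite le_min H ?inE ?eqxx // IH //.
by move=> a al; apply: H; rewrite inE al orbT.
Qed.

Lemma mfold_att (T : eqType) (l : seq T) h K :
  mfold l h K = K \/ exists2 a, a \in l & mfold l h K = h a.
Proof.
rewrite /mfold; elim: l => [|b l IH] /=; first by left.
case: (leP (h b) (foldr (fun a m => Num.min (h a) m) K l)) => hb.
  by right; exists b; rewrite ?inE ?eqxx.
case: IH => [->|[a al ->]]; first by left.
by right; exists a; rewrite // inE al orbT.
Qed.

Lemma mfold_eq (T : eqType) (l : seq T) h1 h2 K :
  (forall a, a \in l -> h1 a = h2 a) -> mfold l h1 K = mfold l h2 K.
Proof.
elim: l => //= b l IH H; rewrite H ?inE ?eqxx // IH //.
by move=> a al; apply: H; rewrite inE al orbT.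
Qed.

Definition mx (T : Type) (l : seq T) (h : T -> rat) : rat :=
  foldr (fun a m => Num.max (h a) m) 0 l.

Lemma mx_ge (T : eqType) (l : seq T) h a : a \in l -> h a <= mx l h.
Proof.
elim: l => //= b l IH; rewrite inE => /orP [/eqP ->|al]; first by rewrite le_max lexx.
by rewrite le_max IH ?orbT.
Qed.

Lemma mx_ge0 (T : Type) (l : seq T) h : 0 <= mx l h.
Proof. by elim: l => //= b l IH; rewrite le_max IH orbT. Qed.

Section Met.
Variables (T : countType) (d : T -> T -> rat) (hU : is_rational_Urysohn d).

Let hm : is_metric d. Proof. by case: hU. Qed.
Lemma dge0 x y : 0 <= d x y. Proof. by case: hm. Qed.
Lemma d0 x : d x x = 0. Proof. by case: hm => _ H _ _; apply: (proj2 (H _ _)). Qed.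
Lemma deq x y : d x y = 0 -> x = y. Proof. by case: hm => _ H _ _; apply: (proj1 (H _ _)). Qed.
Lemma dsym x y : d x y = d y x. Proof. by case: hm. Qed.
Lemma dtri x y z : d x z <= d x y + d y z. Proof. by case: hm. Qed.

Lemma extend (D : seq T) (u : T -> rat) :
  (forall p, p \in D -> 0 <= u p) ->
  (forall p q, p \in D -> q \in D -> u p <= u q + d p q) ->
  (forall p q, p \in D -> q \in D -> d p q <= u p + u q) ->
  exists z, forall p, p \in D -> d z p = u p.
Proof.
move=> u0 uL uT.
case: (boolP (has (fun p => u p == 0) D)) => [/hasP [p pD /eqP up0]|].
  exists p => q qD; apply/le_anti/andP; split.
    by have := uT p q pD qD; rewrite up0 add0r.
  by have := uL q p qD pD; rewrite up0 add0r dsym.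
move/hasPn => upos.
have up : forall p, p \in D -> 0 < u p.
  by move=> p pD; rewrite lt_def upos // u0.
pose F := option (seq_sub D).
pose dF (a b : F) : rat := match a, b with
  | None, None => 0 | None, Some j => u (ssval j) | Some i, None => u (ssval i)
  | Some i, Some j => d (ssval i) (ssval j) end.
have mF : is_metric dF.
  split.
  - by case=> [i|] [j|] //=; rewrite ?dge0 ?u0 ?ssvalP.
  - case=> [i|] [j|] //=; split => //.
    + by move/deq => e; congr Some; apply: val_inj.
    + by case=> ->; rewrite d0.
    + by move=> e; move: (up _ (ssvalP i)); rewrite e ltxx.
    + by move=> e; move: (up _ (ssvalP j)); rewrite e ltxx.
  - by case=> [i|] [j|] //=; rewrite dsym.
  - case=> [i|] [j|] [k|] //=; rewrite ?addr0 ?add0r ?lexx ?u0 ?ssvalP //;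
    first [ exact: dtri
          | by rewrite addrC; apply: uL; apply: ssvalP
          | by rewrite dsym; apply: uL; apply: ssvalP
          | exact: uT (ssvalP _) (ssvalP _)
          | by rewrite addr_ge0 ?u0 ?ssvalP ].
have [_ univ homog] := hU.
have [f hf] := univ F dF mF.
pose p (t : T) := if [pick i | f (Some i) == t] is Some i then ssval i else t.
have pf : forall i, p (f (Some i)) = ssval i.
  move=> i; rewrite /p; case: pickP => [j /eqP e|H]; last by move: (H i); rewrite eqxx.
  have : dF (Some j) (Some i) = 0 by rewrite -hf e d0.
  by move/deq.
pose L := [seq f (Some i) | i <- enum {: seq_sub D}].
have [g [[ig _] gp]] : exists g, is_isometry d g /\ forall x, x \in L -> g x = p x.
  apply: homog => x y /mapP [i _ ->] /mapP [j _ ->].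
  by rewrite !pf hf.
exists (g (f None)) => q qD.
pose i := @SeqSub _ D q qD.
have gi : g (f (Some i)) = q by rewrite gp ?pf // map_f // mem_enum.
by rewrite -{1}gi ig hf.
Qed.

Lemma move (D : seq T) z z' : (forall a, a \in D -> d z' a = d z a) ->
  exists h, Iso_fix d (fun a => a \in D) h /\ h z = z'.
Proof.
move=> H.
have [_ _ homog] := hU.
pose p (t : T) := if t == z then z' else t.
have [g [ig gp]] : exists g, is_isometry d g /\ forall x, x \in z :: D -> g x = p x.
  apply: homog => x y; rewrite !inE /p.
  case: (eqVneq x z) => [->|xz]; case: (eqVneq y z) => [->|yz] //=.
  - by rewrite !d0.
  - by move=> _ yD; apply: H.
  - by move=> xD _; rewrite dsym H // dsym.
exists g; split; last by rewrite gp ?inE ?eqxx // /p eqxx.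
split=> // a aD; rewrite gp ?inE ?aD ?orbT // /p.
case: (eqVneq a z) => // e; subst a; apply: deq.
by rewrite H // d0.
Qed.
End Met.

Section Step.
Variables (T : countType) (d : T -> T -> rat) (hU : is_rational_Urysohn d).

Definition Pinv (A B : seq T) (phi : T -> rat) (x z : T) (tA tB : rat) : Prop :=
  [/\ forall c, c \in A -> c \in B -> d z c = d x c,
      forall p, p \in A -> d z p <= phi p,
      forall p, p \in B -> d z p <= phi p,
      forall p, p \in A -> p \notin B -> Num.min (phi p) tA <= d z p &
      forall p, p \in B -> p \notin A -> Num.min (phi p) tB <= d z p].

Lemma Pinv_swap A B phi x z tA tB : Pinv A B phi x z tA tB -> Pinv B A phi x z tB tA.
Proof. by case=> H1 H2 H3 H4 H5; split=> // c cB cA; apply: H1. Qed.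

Lemma Pinv_weak A B phi x z tA tB tA' tB' : Pinv A B phi x z tA tB ->
  tA' <= tA -> tB' <= tB -> Pinv A B phi x z tA' tB'.
Proof.
case=> H1 H2 H3 H4 H5 lA lB; split=> // p pX pY.
  have := H4 p pX pY; rewrite !ge_min => /orP [->//|h]; by rewrite (le_trans lA h) orbT.
have := H5 p pX pY; rewrite !ge_min => /orP [->//|h]; by rewrite (le_trans lB h) orbT.
Qed.

Lemma stepA (A B : seq T) (x : T) (K del : rat) (phi : T -> rat) z tA tB :
  0 <= K ->
  (forall p q, (p \in A) || (p \in B) -> (q \in A) || (q \in B) -> d p q <= K) ->
  (forall p q, (p \in A) || (p \in B) -> (q \in A) || (q \in B) -> p != q -> del <= d p q) ->
  (forall p, phi p <= K) ->
  (forall p, phi p = K \/ exists c, [/\ c \in A, c \in B & phi p = d x c + d c p]) ->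
  (forall c p, c \in A -> c \in B -> phi p <= d x c + d c p) ->
  (forall a p, phi p <= phi a + d a p) ->
  Pinv A B phi x z tA tB ->
  exists z', (forall a, a \in A -> d z' a = d z a) /\ Pinv A B phi x z' tA (tA + del).
Proof.
move=> K0 HK Hdel P1 P2 P3 P4 [I1 I2 I3 I4 I5].
pose v p := mfold A (fun a => d z a + d a p) K.
have vA : forall p, p \in A -> v p = d z p.
  move=> p pA; apply/le_anti/andP; split.
    by apply: le_trans (mfold_le _ _ pA) _; rewrite (d0 hU) // addr0.
  apply: mfold_ge; first exact: le_trans (I2 p pA) (P1 p).
  by move=> a _; apply: (dtri hU).
have v0 : forall p, 0 <= v p by move=> p; apply: mfold_ge => // a _; rewrite addr_ge0 ?(dge0 hU).
have [z' hz'] : exists z', forall p, p \in A ++ B -> d z' p = v p.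
  apply: (extend hU) => [p _|p q pD qD|p q pD qD]; first exact: v0.
  - case: (mfold_att A (fun a => d z a + d a q) K) => [e|[a aA e]]; rewrite /v e.
      by apply: le_trans (mfold_leK _ _ _) _; rewrite lerDl (dge0 hU).
    apply: le_trans (mfold_le _ _ aA) _; rewrite -addrA lerD2l.
    by rewrite (dsym hU p q); apply: (dtri hU).
  - have pAB : (p \in A) || (p \in B) by rewrite -mem_cat.
    have qAB : (q \in A) || (q \in B) by rewrite -mem_cat.
    case: (mfold_att A (fun a => d z a + d a p) K) => [e|[a aA e]]; rewrite /v e.
      by apply: le_trans (HK p q pAB qAB) _; rewrite lerDl v0.
    case: (mfold_att A (fun a => d z a + d a q) K) => [e'|[a' aA' e']]; rewrite e'.
      by apply: le_trans (HK p q pAB qAB) _; rewrite lerDr addr_ge0 ?(dge0 hU).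
    apply: le_trans (dtri hU p z q) _; apply: lerD.
      by rewrite (dsym hU p z); apply: (dtri hU).
    exact: (dtri hU).
have z'A : forall a, a \in A -> d z' a = d z a.
  by move=> a aA; rewrite hz' ?mem_cat ?aA // vA.
exists z'; split=> //; split.
- by move=> c cA cB; rewrite z'A ?I1.
- by move=> p pA; rewrite z'A ?I2.
- move=> p pB; rewrite hz' ?mem_cat ?pB ?orbT //.
  case: (P2 p) => [->|[c [cA cB ->]]]; first exact: mfold_leK.
  by rewrite -I1 //; apply: mfold_le.
- by move=> p pA pB; rewrite z'A ?I4.
- move=> p pB pA; rewrite hz' ?mem_cat ?pB ?orbT //.
  apply: mfold_ge; first by rewrite ge_min P1.
  move=> a aA; case: (boolP (a \in B)) => aB.
    by rewrite I1 // ge_min P3.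
  have ap : a != p by apply: contraNneq pA => <-.
  have dap : del <= d a p.
    by apply: Hdel => //; rewrite ?aA ?pB ?orbT.
  have := I4 a aA aB; rewrite !ge_min => /orP [h|h].
    by rewrite (le_trans (P4 a p)) // lerD2r.
  by apply/orP; right; exact: lerD h dap.
Qed.
End Step.

Section Reach.
Variables (T : countType) (d : T -> T -> rat) (hU : is_rational_Urysohn d).

Definition SS (A B : seq T) := fun h => Iso_fix d (fun x => x \in A) h \/
                                      Iso_fix d (fun x => x \in B) h.
Definition reach A B (z z' : T) := exists k, generated d (SS A B) k /\ k z = z'.

Lemma SS_iso A B h : SS A B h -> is_isometry d h.
Proof. by case=> -[]. Qed.

Lemma reach_refl A B z : reach A B z z.
Proof. by exists id; split=> //; apply: gen_id. Qed.

Lemma reach_trans A B z1 z2 z3 : reach A B z1 z2 -> reach A B z2 z3 -> reach A B z1 z3.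
Proof.
move=> [k1 [g1 e1]] [k2 [g2 e2]]; exists (k2 \o k1); split; last by rewrite /= e1.
exact: gen_comp.
Qed.

Lemma reach_sym A B z1 z2 : reach A B z1 z2 -> reach A B z2 z1.
Proof.
move=> [k [gk e]]; have [h [gh kh hk]] := gen_inv (@SS_iso A B) gk.
by exists h; split=> //; rewrite -e kh.
Qed.

Lemma reach_A A B z z' : (forall a, a \in A -> d z' a = d z a) -> reach A B z z'.
Proof.
move=> H; have [h [ih e]] := move hU H.
by exists h; split=> //; apply: gen_in; left.
Qed.

Lemma reach_B A B z z' : (forall a, a \in B -> d z' a = d z a) -> reach A B z z'.
Proof.
move=> H; have [h [ih e]] := move hU H.
by exists h; split=> //; apply: gen_in; right.
Qed.

Lemma profile (A B : seq T) (x : T) (K del : rat) (phi : T -> rat) :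
  0 <= K -> 0 < del ->
  (forall p q, (p \in A) || (p \in B) -> (q \in A) || (q \in B) -> d p q <= K) ->
  (forall p q, (p \in A) || (p \in B) -> (q \in A) || (q \in B) -> p != q -> del <= d p q) ->
  (forall p, phi p <= K) ->
  (forall p, phi p = K \/ exists c, [/\ c \in A, c \in B & phi p = d x c + d c p]) ->
  (forall c p, c \in A -> c \in B -> phi p <= d x c + d c p) ->
  (forall a p, phi p <= phi a + d a p) ->
  Pinv d A B phi x x 0 0 ->
  exists z, reach A B x z /\ forall p, p \in A -> d z p = phi p.
Proof.
move=> K0 del0 HK Hdel P1 P2 P3 P4 I0.
have HK' : forall p q, (p \in B) || (p \in A) -> (q \in B) || (q \in A) -> d p q <= K.
  by move=> p q; rewrite (orbC (p \in B)) (orbC (q \in B)); apply: HK.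
have Hdel' : forall p q, (p \in B) || (p \in A) -> (q \in B) || (q \in A) -> p != q -> del <= d p q.
  by move=> p q; rewrite (orbC (p \in B)) (orbC (q \in B)); apply: Hdel.
have P2' : forall p, phi p = K \/ exists c, [/\ c \in B, c \in A & phi p = d x c + d c p].
  by move=> p; case: (P2 p) => [->|[c [? ? ?]]]; [left|right; exists c].
have P3' : forall c p, c \in B -> c \in A -> phi p <= d x c + d c p.
  by move=> c p cB cA; apply: P3.
have it : forall n : nat, exists z, reach A B x z /\
     Pinv d A B phi x z (n%:R * del) (n%:R * del).
  elim=> [|n [z [rz Iz]]]; first by exists x; rewrite mul0r; split=> //; apply: reach_refl.
  have [z1 [e1 I1]] := stepA hU K0 HK Hdel P1 P2 P3 P4 Iz.
  have [z2 [e2 I2]] := stepA hU K0 HK' Hdel' P1 P2' P3' P4 (Pinv_swap I1).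
  exists z2; split.
    apply: reach_trans rz _; apply: reach_trans (reach_A B e1) _; exact: reach_B e2.
  have I3 := Pinv_swap I2.
  apply: Pinv_weak I3 _ _; rewrite -[n.+1]addn1 natrD mulrDl mul1r //.
  by rewrite lerDl ltW.
have [n Hn] : exists n : nat, K <= n%:R * del.
  exists (Num.bound (K / del)); rewrite -ler_pdivrMr //.
  by apply: ltW; apply: archi_boundP; rewrite divr_ge0 // ltW.
have [z [rz [J1 J2 J3 J4 J5]]] := it n.
exists z; split=> // p pA; apply/le_anti; rewrite J2 //=.
case: (boolP (p \in B)) => pB.
  by rewrite J1 //; apply: le_trans (P3 p p pA pB) _; rewrite (d0 hU) addr0.
have := J4 p pA pB; rewrite ge_min => /orP [//|h].
by apply: le_trans h; apply: le_trans Hn.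
Qed.
End Reach.

Section One.
Variables (T : countType) (d : T -> T -> rat) (hU : is_rational_Urysohn d).

Lemma onepoint (A B : seq T) g x0 :
  Iso_fix d (fun x => x \in A /\ x \in B) g -> reach d A B x0 (g x0).
Proof.
move=> [[ig _] fg].
set y := g x0.
have ey : forall c, c \in A -> c \in B -> d y c = d x0 c.
  by move=> c cA cB; rewrite /y -{1}(fg c (conj cA cB)) ig.
pose AB := A ++ B.
pose K := mx AB (fun p => Num.max (Num.max (d x0 p) (d y p)) (mx AB (fun q => d p q))).
have K0 : 0 <= K by apply: mx_ge0.
have HK : forall p q, (p \in A) || (p \in B) -> (q \in A) || (q \in B) -> d p q <= K.
  move=> p q; rewrite -!mem_cat => pD qD.
  apply: le_trans (mx_ge _ pD); rewrite le_max (mx_ge _ qD) orbT //.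
have Kx : forall p, (p \in A) || (p \in B) -> d x0 p <= K /\ d y p <= K.
  move=> p; rewrite -mem_cat => pD; split; apply: le_trans (mx_ge _ pD);
  by rewrite !le_max lexx ?orbT.
pose inner p := mfold AB (fun q => if q == p then 1 else d p q) 1.
pose del := mfold AB inner 1.
have del0 : 0 < del.
  rewrite /del; case: (mfold_att AB inner 1) => [->//|[p _ ->]].
  case: (mfold_att AB (fun q => if q == p then 1 else d p q) 1) => [e|[q _ e]];
    rewrite /inner e //.
  case: eqP => // qp; rewrite lt_def (dge0 hU) // andbT.
  by apply/eqP => /(deq hU) pq; apply: qp.
have Hdel : forall p q, (p \in A) || (p \in B) -> (q \in A) || (q \in B) -> p != q -> del <= d p q.
  move=> p q; rewrite -!mem_cat => pD qD pq.
  apply: le_trans (mfold_le _ _ pD) _.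
  apply: le_trans (mfold_le _ _ qD) _.
  by rewrite eq_sym (negbTE pq).
pose C := [seq c <- A | c \in B].
pose phi p := mfold C (fun c => d x0 c + d c p) K.
have P1 : forall p, phi p <= K by move=> p; apply: mfold_leK.
have P2 : forall r, (forall c, c \in A -> c \in B -> d r c = d x0 c) ->
   forall p, phi p = K \/ exists c, [/\ c \in A, c \in B & phi p = d r c + d c p].
  move=> r er p; case: (mfold_att C (fun c => d x0 c + d c p) K) => [e|[c cC e]].
    by left.
  move: cC; rewrite mem_filter => /andP [cB cA].
  by right; exists c; split=> //; rewrite /phi e er.
have P3 : forall r, (forall c, c \in A -> c \in B -> d r c = d x0 c) ->
   forall c p, c \in A -> c \in B -> phi p <= d r c + d c p.
  move=> r er c p cA cB; rewrite er //; apply: mfold_le.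
  by rewrite mem_filter cA cB.
have P4 : forall a p, phi p <= phi a + d a p.
  move=> a p; case: (mfold_att C (fun c => d x0 c + d c a) K) => [e|[c cC e]];
    rewrite /phi e.
    by apply: le_trans (P1 p) _; rewrite lerDl (dge0 hU).
  apply: le_trans (mfold_le _ _ cC) _; rewrite -addrA lerD2l; exact: (dtri hU).
have init : forall r, (forall c, c \in A -> c \in B -> d r c = d x0 c) ->
    (forall p, (p \in A) || (p \in B) -> d r p <= K) -> Pinv d A B phi r r 0 0.
  move=> r er rK.
  have h : forall p, (p \in A) || (p \in B) -> d r p <= phi p.
    move=> p pD; case: (P2 r er p) => [->|[c [cA cB ->]]]; first exact: rK.
    exact: (dtri hU).
  split=> //.
  - by move=> p pA; apply: h; rewrite pA.
  - by move=> p pB; apply: h; rewrite pB orbT.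
  - by move=> p _ _; rewrite ge_min (dge0 hU) orbT.
  - by move=> p _ _; rewrite ge_min (dge0 hU) orbT.
have ex : forall c, c \in A -> c \in B -> d x0 c = d x0 c by [].
have [zx [rx hx]] := profile hU K0 del0 HK Hdel P1 (P2 x0 ex) (P3 x0 ex) P4
   (init x0 ex (fun p pD => proj1 (Kx p pD))).
have [zy [ry hy]] := profile hU K0 del0 HK Hdel P1 (P2 y ey) (P3 y ey) P4
   (init y ey (fun p pD => proj2 (Kx p pD))).
apply: reach_trans rx _; apply: reach_trans _ (reach_sym ry).
by apply: (reach_A hU) => a aA; rewrite hx ?hy.
Qed.
End One.

Section Main.
Variables (T : countType) (d : T -> T -> rat) (hU : is_rational_Urysohn d).

Lemma gen_fixAB (A B : seq T) h : generated d (SS d A B) h ->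
  Iso_fix d (fun x => x \in A /\ x \in B) h.
Proof.
apply: gen_sub; first exact: fix_subgroup.
by move=> k [[ik fk]|[ik fk]]; split=> // x [xA xB]; apply: fk.
Qed.

Lemma multi (A B : seq T) g (F : seq T) :
  Iso_fix d (fun x => x \in A /\ x \in B) g ->
  exists h, generated d (SS d A B) h /\ forall x, x \in F -> h x = g x.
Proof.
move=> Hg; elim: F => [|x F [h0 [g0 e0]]].
  by exists id; split=> //; apply: gen_id.
have [h0i [gi c1 c2]] := gen_inv (@SS_iso _ d A B) g0.
have igi : is_isometry d h0i := gen_sub (@iso_subgroup _ d) (@SS_iso _ d A B) gi.
have fgi := gen_fixAB gi.
have Hg' : Iso_fix d (fun x => x \in A ++ F /\ x \in B ++ F) (h0i \o g).
  case: Hg => ig fg; case: fgi => _ fi.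
  split; first by case: (@iso_subgroup _ d) => _ _ c _; apply: c.
  move=> c []; rewrite !mem_cat /=.
  case: (boolP (c \in F)) => cF; first by rewrite -e0 // c1.
  rewrite !orbF => cA cB; by rewrite fg // fi.
have [k [gk ek]] := onepoint hU x Hg'.
have gk' : generated d (SS d A B) k.
  apply: gen_mono gk => h [[ih fh]|[ih fh]]; [left|right]; split=> // y yA;
  by apply: fh; rewrite mem_cat yA.
have kF : forall y, y \in F -> k y = y.
  have HS : forall h, SS d (A ++ F) (B ++ F) h -> Iso_fix d (fun y => y \in F) h.
    by move=> h [[ih fh]|[ih fh]]; split=> // z zF; apply: fh; rewrite mem_cat zF orbT.
  by have [_ fk] := gen_sub (fix_subgroup d (fun y => y \in F)) HS gk.
exists (h0 \o k); split; first exact: gen_comp.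
move=> y; rewrite inE => /orP [/eqP ->|yF] /=; first by rewrite ek /= c2.
by rewrite kF // e0.
Qed.
End Main.

Theorem corollary4p17 (T : countType) (d : T -> T -> rat)
  (hU : is_rational_Urysohn d) (A B : seq T) :
  forall g : T -> T,
    Iso_fix d (fun x => x \in A /\ x \in B) g <->
    iso_closure d (generated d (fun h => Iso_fix d (fun x => x \in A) h \/
                                      Iso_fix d (fun x => x \in B) h)) g.
Proof.
move=> g; split.
  move=> Hg; split; first by case: Hg.
  by move=> F; apply: multi.
case=> ig Hc; split=> // x [xA xB].
have [h [gh e]] := Hc [:: x].
have [_ fh] := gen_fixAB gh.
by rewrite -e ?inE ?eqxx // fh.
Qed.
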